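(* Let $(\mathbf k,\log)$ be an ordered field with surjective logarithm and $(\mathbf k((G)),l)$ a series field with prelogarithmic section. Let $H\ne\{1\}$ be a subgroup of $G$ satisfying the growth axiom. Define $H^{-1}=\{1\}$, $H^0=H$ and inductively $H^{n+1}=H^n\cdot\mathrm{Exp}\,\mathbf k(((H^n)^{>H^{n-1}}))\subseteq G^{\#(n+1)}$. Then for every $n\ge0$: $H^n$ is a proper convex subgroup of $H^{n+1}$, $H^{n+1}$ is the anti-lexicographic product of $H^n$ and $\mathrm{Exp}\,\mathbf k(((H^n)^{>H^{n-1}}))$, and $\mathrm{Log}(h)<|f|$ for all $h\in H^{n+1}$ and all nonzero $f\in\mathbf k(((H^{n+1})^{>H^n}))$.
   Context: Let $\mathbf k$ be an ordered field and $(G,\cdot,<)$ a totally ordered abelian group (written multiplicatively). $\mathbf k((G))$ denotes the field of generalized power series $\alpha=\sum_{g\in G}\alpha(g)\,g$ ($\alpha(g)\in\mathbf k$) with anti-well-ordered support, usual operations, canonical valuation $v(\alpha)=\max\operatorname{supp}\alpha$ and ordering $\alpha>0$ iff $\alpha(v(\alpha))>0$; $\mathbf k$, $G$ are identified with subsets of $\mathbf k((G))$. For $S\subseteq G$, $\mathbf k((S))=\{\alpha:\operatorname{supp}\alpha\subseteq S\}$. For a subgroup $H$ and $A\subseteq G$, $H^{>A}=\{h\in H:h>a\ \forall a\in A\}$, $H^{>1}=\{h\in H:h>1\}$. Every $\alpha>0$ is uniquely $\alpha=g\,a(1+\varepsilon)$ with $g=v(\alpha)$, $a\in\mathbf k^{>0}$,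 $\varepsilon\in\mathbf k((G^{<1}))$. A prelogarithmic section is an order-preserving group embedding $l:(G,\cdot)\to(\mathbf k((G^{>1})),+)$; $\log:(\mathbf k^{>0},\cdot)\to(\mathbf k,+)$ is an order-preserving group isomorphism. The prelogarithm of $l$ is $L(g\,a(1+\varepsilon))=l(g)+\log a+\sum_{i\ge1}(-1)^{i-1}\varepsilon^i/i$. Exponential extension: $G^\#$ is the ordered abelian group of formal symbols $e(\alpha)$, $\alpha\in\mathbf k((G^{>1}))$, with $e(\alpha)e(\beta)=e(\alpha+\beta)$, $e(\alpha)<e(\beta)\iff\alpha<\beta$, and $e(l(g))$ identified with $g\in G$; $l^\#(e(\alpha))=\alpha$ is a prelogarithmic section of $\mathbf k((G^\#))$ extending $l$. Iterating: $G^{\#n}$, $l^{\#n}$, prelogarithms $L^{\#n}$. The EL-series field is $\mathbf k((G))^{EL}=\bigcup_n\mathbf k((G^{\#n}))$ with $\mathrm{Log}=\bigcup_nL^{\#n}$, an order preserving isomorphism from the positive elements onto $(\mathbf k((G))^{EL},+)$; $\mathrm{Exp}=\mathrm{Log}^{-1}$. A subgroup $H\ne\{1\}$ of $G$ satisfies the growth axiom if $\mathrm{Log}(h)<|f|$ for all $h\in H$ and all nonzero $f\in\mathbf k((H^{>1}))$. ''Anti-lexicographic product'' of subgroups $A,B$: the group is $A\cdot B$, the product is direct and $A$ is convex in it. *)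

(* Defs.v *)
From HB Require Import structures.
From mathcomp Require Import all_boot all_order all_algebra.
From Stdlib Require Import ClassicalEpsilon.
Set Implicit Arguments. Unset Strict Implicit. Unset Printing Implicit Defensive.
Import Order.TTheory GRing.Theory Num.Theory.
Local Open Scope ring_scope.

(* A "raw ordered group": carrier, multiplication, unit, inverse, strict
   order, and a predicate singling out the actual elements of the group
   (the carrier of a constructed level may contain junk elements). *)
Record ROG := MkROG {
  car :> Type;
  gop : car -> car -> car;
  gone : car;
  ginv : car -> car;
  glt : car -> car -> Prop;
  gvalid : car -> Prop }.

Definition ordered_abelian_group (G : Type) (mul : G -> G -> G) (one : G)
  (inv : G -> G) (lt : G -> G -> Prop) : Prop :=
  (forall x y z, mul x (mul y z) = mul (mul x y) z) /\
  (forall x y, mul x y = mul y x) /\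
  (forall x, mul one x = x) /\
  (forall x, mul (inv x) x = one) /\
  (forall x, ~ lt x x) /\
  (forall x y z, lt x y -> lt y z -> lt x z) /\
  (forall x y, lt x y \/ x = y \/ lt y x) /\
  (forall x y z, lt x y -> lt (mul x z) (mul y z)).

Definition base_rog (G : Type) (mul : G -> G -> G) (one : G) (inv : G -> G)
  (lt : G -> G -> Prop) : ROG := @MkROG G mul one inv lt (fun _ => True).

Section Series.
Variable k : realFieldType.
Variable M : ROG.

(* formal series sum_g a(g) g, represented by their coefficient function *)
Definition ser := M -> k.
Definition supp (a : ser) : M -> Prop := fun x => a x != 0.

Definition anti_wo (P : M -> Prop) : Prop :=
  forall Q : M -> Prop, (exists x, Q x) -> (forall x, Q x -> P x) ->
    exists m, Q m /\ forall x, Q x -> x = m \/ glt x m.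

(* a belongs to k((S)) : anti-well-ordered support contained in S *)
Definition is_ser_on (S : M -> Prop) (a : ser) : Prop :=
  anti_wo (supp a) /\ forall x, supp a x -> S x.

Definition ser0 : ser := fun _ => 0.
Definition seradd (a b : ser) : ser := fun x => a x + b x.
Definition seropp (a : ser) : ser := fun x => - a x.
Definition serlt (a b : ser) : Prop :=
  exists g, 0 < b g - a g /\ forall h, glt g h -> b h - a h = 0.
Definition serpos (a : ser) : Prop := serlt ser0 a.
Definition serabs (a : ser) : ser :=
  if excluded_middle_informative (serpos a) then a else seropp a.

Definition above (A B : M -> Prop) : M -> Prop :=
  fun x => A x /\ forall b, B b -> glt b x.

(* Exponential extension M^# : symbols e(alpha), alpha in k((M^{>1})),
   represented by alpha itself; e(a)e(b)=e(a+b), e(a)<e(b) iff a<b. *)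
Definition sharp : ROG :=
  @MkROG ser seradd ser0 seropp serlt
    (is_ser_on (fun x => gvalid x /\ glt (gone M) x)).

Definition setmul (A B : M -> Prop) : M -> Prop :=
  fun z => exists a b, A a /\ B b /\ z = gop a b.
Definition subgroup (A : M -> Prop) : Prop :=
  A (gone M) /\ (forall x y, A x -> A y -> A (gop x y)) /\
  (forall x, A x -> A (ginv x)).
Definition gle (x y : M) : Prop := glt x y \/ x = y.
Definition convex_in (A X : M -> Prop) : Prop :=
  forall a1 a2 x, A a1 -> A a2 -> X x -> gle a1 x -> gle x a2 -> A x.
Definition proper_convex_subgroup (A X : M -> Prop) : Prop :=
  subgroup A /\ subgroup X /\ (forall x, A x -> X x) /\
  (exists x, X x /\ ~ A x) /\ convex_in A X.
Definition antilex_product (A B X : M -> Prop) : Prop :=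
  subgroup A /\ subgroup B /\ (forall x, X x <-> setmul A B x) /\
  (forall x, A x -> B x -> x = gone M) /\ convex_in A X.
End Series.

Definition img_of (M N : ROG) (f : M -> N) (P : M -> Prop) : N -> Prop :=
  fun y => exists x, P x /\ f x = y.

Definition push (k : realFieldType) (M N : ROG) (phi : M -> N) (a : M -> k)
  : N -> k :=
  fun y => match excluded_middle_informative (exists x, phi x = y) with
           | left H => a (proj1_sig (constructive_indefinite_description _ H))
           | right _ => 0
           end.

Section Tower.
Variables (k : realFieldType) (G0 : ROG) (l : G0 -> (G0 -> k)).

Fixpoint lvl (n : nat) : ROG :=
  match n with O => G0 | S m => sharp k (lvl m) end.

(* identification of G^{#n} inside G^{#(n+1)}: g |-> e(l^{#n}(g)) *)
Fixpoint up (n : nat) : lvl n -> lvl n.+1 :=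
  match n return lvl n -> lvl n.+1 with
  | O => l
  | S m => push (@up m)
  end.

(* Log on the monomial group G^{#n}: Log h = l^{#n}(h), a series in
   k((G^{#n})) (l^{#n}(e(alpha)) = alpha, viewed in k((G^{#n}))). *)
Definition Log (n : nat) (h : lvl n) : lvl n -> k := up h.

(* Exp k((S)) for S a set of monomials of G^{#n} lying above 1:
   the monomials e(alpha) of G^{#(n+1)} with alpha in k((S)). *)
Definition Expset (n : nat) (S : lvl n -> Prop) : lvl n.+1 -> Prop :=
  fun x => @gvalid (lvl n.+1) x /\ is_ser_on S x.

(* HP H n = (H^n, H^{n-1}) as subsets of G^{#n}. *)
Fixpoint HP (H : G0 -> Prop) (n : nat) : (lvl n -> Prop) * (lvl n -> Prop) :=
  match n return (lvl n -> Prop) * (lvl n -> Prop) with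
  | O => (H, fun x => x = gone G0)
  | S m =>
      let c := (HP H m).1 in let p := (HP H m).2 in
      (setmul (img_of (@up m) c) (@Expset m (above c p)), img_of (@up m) c)
  end.

Definition Hpow (H : G0 -> Prop) (n : nat) : lvl n -> Prop := (HP H n).1.

Definition growth_rel (n : nat) (X S : lvl n -> Prop) : Prop :=
  forall h, X h -> forall f : lvl n -> k, is_ser_on S f -> f <> @ser0 k (lvl n) ->
    serlt (Log h) (serabs f).
End Tower.

(* Main.v *)
Require Import Defs.
From HB Require Import structures.
From mathcomp Require Import all_boot all_order all_algebra.
From mathcomp Require Import ring lra.
From Stdlib Require Import ClassicalEpsilon Classical FunctionalExtensionality.
Import Order.TTheory GRing.Theory Num.Theory.
Local Open Scope ring_scope.
Set Implicit Arguments. Unset Strict Implicit.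


Section Gen.
Variable k : realFieldType.
Variable M : ROG.
Hypothesis Hirr : forall x : M, ~ glt x x.
Hypothesis Htrans : forall x y z : M, gvalid x -> gvalid y -> gvalid z ->
  glt x y -> glt y z -> glt x z.
Hypothesis Htot : forall x y : M, gvalid x -> gvalid y -> glt x y \/ x = y \/ glt y x.

Definition sv (a : M -> k) := forall x, supp a x -> gvalid x.

Lemma serlt_irr (a : M -> k) : ~ serlt a a.
Proof. move=> [g [H _]]. by rewrite subrr ltxx in H. Qed.

Lemma anti_wo_sub (P P' : M -> Prop) : (forall x, P x -> P' x) -> anti_wo P' -> anti_wo P.
Proof. move=> HP HW Q HQ HQP. apply: HW => // x /HQP; exact: HP. Qed.

Lemma lead_of (P : M -> Prop) : (forall x, P x -> gvalid x) -> anti_wo P ->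
  (exists x, P x) -> exists m, P m /\ forall h, glt m h -> ~ P h.
Proof.
move=> V W E. have [m [Pm Hm]] := W P E (fun x h => h).
exists m; split=> // h mh Ph. case: (Hm h Ph) => [e|hm].
- subst; exact: (Hirr mh).
- exact: (Hirr (Htrans (V _ Pm) (V _ Ph) (V _ Pm) mh hm)).
Qed.

Lemma anti_wo_union (P P' : M -> Prop) : (forall x, P x -> gvalid x) ->
  (forall x, P' x -> gvalid x) ->
  anti_wo P -> anti_wo P' -> anti_wo (fun x => P x \/ P' x).
Proof.
move=> V1 V2 W1 W2 Q [x Qx] HQ.
have V : forall y, Q y -> gvalid y by move=> y /HQ [/V1|/V2].
case: (classic (exists y, Q y /\ P y)) => [E1|N1];
  case: (classic (exists y, Q y /\ P' y)) => [E2|N2].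
- have [m1 [[Qm1 Pm1] M1]] := W1 (fun y => Q y /\ P y) E1 (fun y h => proj2 h).
  have [m2 [[Qm2 Pm2] M2]] := W2 (fun y => Q y /\ P' y) E2 (fun y h => proj2 h).
  have [lt|[eq|gt]] := Htot (V1 _ Pm1) (V2 _ Pm2).
  + exists m2; split=> // y Qy. case: (HQ y Qy) => Py.
    * case: (M1 y (conj Qy Py)) => [->|ylt]; first by right.
      right; exact: (Htrans (V _ Qy) (V1 _ Pm1) (V2 _ Pm2) ylt lt).
    * exact: M2.
  + exists m1; split=> // y Qy. case: (HQ y Qy) => Py.
    * exact: M1.
    * rewrite eq; exact: M2.
  + exists m1; split=> // y Qy. case: (HQ y Qy) => Py.
    * exact: M1.
    * case: (M2 y (conj Qy Py)) => [->|ylt]; first by right.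
      right; exact: (Htrans (V _ Qy) (V2 _ Pm2) (V1 _ Pm1) ylt gt).
- have [m1 [[Qm1 Pm1] M1]] := W1 (fun y => Q y /\ P y) E1 (fun y h => proj2 h).
  exists m1; split=> // y Qy. case: (HQ y Qy) => Py; first exact: M1.
  by exfalso; apply: N2; exists y.
- have [m2 [[Qm2 Pm2] M2]] := W2 (fun y => Q y /\ P' y) E2 (fun y h => proj2 h).
  exists m2; split=> // y Qy. case: (HQ y Qy) => Py; last exact: M2.
  by exfalso; apply: N1; exists y.
- by case: (HQ x Qx) => Px; [case: N1|case: N2]; exists x.
Qed.

Lemma supp_add (a b : M -> k) x : supp (seradd a b) x -> supp a x \/ supp b x.
Proof.
rewrite /supp /seradd => H. case: (eqVneq (a x) 0) => [ax|]; last by left.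
by right; rewrite ax add0r in H.
Qed.

Lemma supp_opp (a : M -> k) x : supp (seropp a) x <-> supp a x.
Proof. by rewrite /supp /seropp oppr_eq0. Qed.

Lemma diff_supp (a b : M -> k) x : b x - a x != 0 -> supp a x \/ supp b x.
Proof.
move=> H. case: (eqVneq (a x) 0) => [ax|]; last by left.
by right; rewrite /supp; rewrite ax subr0 in H.
Qed.

Lemma diff_valid (a b : M -> k) x : sv a -> sv b -> b x - a x != 0 -> gvalid x.
Proof. by move=> Va Vb /diff_supp [/Va|/Vb]. Qed.

Lemma is_ser_on_sv S (a : M -> k) : (forall x, S x -> gvalid x) -> is_ser_on S a -> sv a.
Proof. by move=> V [_ H] x /H /V. Qed.

Lemma is_ser_on_mono (S S' : M -> Prop) (a : M -> k) : (forall x, S x -> S' x) ->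
  is_ser_on S a -> is_ser_on S' a.
Proof. by move=> H [W Hs]; split=> // x /Hs /H. Qed.

Lemma is_ser_on0 S : is_ser_on S (@ser0 k M).
Proof.
split=> [Q [x Qx] HQ|x]; last by rewrite /supp /ser0 eqxx.
by have := HQ x Qx; rewrite /supp /ser0 eqxx.
Qed.

Lemma is_ser_on_opp S (a : M -> k) : is_ser_on S a -> is_ser_on S (seropp a).
Proof.
move=> [W H]; split.
- apply: anti_wo_sub W => x /supp_opp //.
- by move=> x /supp_opp /H.
Qed.

Lemma is_ser_on_add S (a b : M -> k) : (forall x, S x -> gvalid x) ->
  is_ser_on S a -> is_ser_on S b -> is_ser_on S (seradd a b).
Proof.
move=> V [Wa Ha] [Wb Hb]; split.
- apply: (anti_wo_sub (P' := fun x => supp a x \/ supp b x)); first exact: supp_add.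
  apply: anti_wo_union => //; by [move=> x /Ha /V | move=> x /Hb /V].
- by move=> x /supp_add [/Ha|/Hb].
Qed.

Lemma serlt_trans (a b c : M -> k) : sv a -> sv b -> sv c ->
  serlt a b -> serlt b c -> serlt a c.
Proof.
move=> Va Vb Vc [g1 [p1 z1]] [g2 [p2 z2]].
have v1 : gvalid g1 by apply: (diff_valid Va Vb); rewrite gt_eqF.
have v2 : gvalid g2 by apply: (diff_valid Vb Vc); rewrite gt_eqF.
have zz1 : forall h, glt g1 h -> b h - a h = 0 by [].
have zz2 : forall h, glt g2 h -> c h - b h = 0 by [].
have E : forall h, c h - a h = (c h - b h) + (b h - a h) by move=> h; ring.
have [lt|[eq|gt]] := Htot v1 v2.
- exists g2; split.
  + by rewrite E (z1 _ lt) addr0.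
  + move=> h g2h; rewrite E z2 // add0r.
    case: (eqVneq (b h - a h) 0) => // nz.
    by apply: z1; apply: (Htrans v1 v2 (diff_valid Va Vb nz) lt g2h).
- subst; exists g2; split; first by rewrite E; apply: addr_gt0.
  by move=> h hh; rewrite E z1 // z2 // addr0.
- exists g1; split.
  + by rewrite E (z2 _ gt) add0r.
  + move=> h g1h; rewrite E z1 // addr0.
    case: (eqVneq (c h - b h) 0) => // nz.
    by apply: z2; apply: (Htrans v2 v1 (diff_valid Vb Vc nz) gt g1h).
Qed.

Lemma ser_eq (a b : M -> k) : (forall x, a x = b x) -> a = b.
Proof. move=> H; exact: functional_extensionality H. Qed.

Lemma serlt_total (a b : M -> k) : is_ser_on (@gvalid M) a -> is_ser_on (@gvalid M) b ->
  serlt a b \/ a = b \/ serlt b a.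
Proof.
move=> [Wa Ha] [Wb Hb].
case: (classic (exists x, b x - a x != 0)) => [E|N]; last first.
  right; left; apply: ser_eq => x; apply/eqP; rewrite eq_sym -subr_eq0.
  by case: (eqVneq (b x - a x) 0) => // nz; exfalso; apply: N; exists x.
have W : anti_wo (fun x => b x - a x != 0).
  apply: (anti_wo_sub (P' := fun x => supp a x \/ supp b x)); first exact: diff_supp.
  by apply: anti_wo_union.
have V : forall x, b x - a x != 0 -> gvalid x by move=> x /diff_supp [/Ha|/Hb].
have [g [Hg Hm]] := lead_of V W E.
have z : forall h, glt g h -> b h - a h = 0.
  move=> h gh; case: (eqVneq (b h - a h) 0) => // nz; exfalso; exact: (Hm h gh nz).
case: (ltrgt0P (b g - a g)) => s.
- by left; exists g.
- right; right; exists g; split; first by rewrite -opprB oppr_gt0.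
  by move=> h gh; rewrite -opprB z // oppr0.
- by rewrite s eqxx in Hg.
Qed.

Lemma serlt_ext (a b a' b' : M -> k) : (forall t, b t - a t = b' t - a' t) ->
  serlt a b -> serlt a' b'.
Proof. move=> E [g [p z]]; exists g; split; first by rewrite -E.
by move=> h gh; rewrite -E; apply: z. Qed.

Lemma ser_lead (f : M -> k) : is_ser_on (@gvalid M) f -> f <> @ser0 k M ->
  exists m, supp f m /\ forall h, glt m h -> f h = 0.
Proof.
move=> [W H] nz.
have E : exists x, supp f x.
  apply: NNPP => N; apply: nz; apply: ser_eq => x; rewrite /ser0.
  by case: (eqVneq (f x) 0) => // Hx; exfalso; apply: N; exists x.
have [m [Hm Hmax]] := lead_of H W E.
exists m; split=> // h mh; case: (eqVneq (f h) 0) => // Hh; exfalso; exact: (Hmax h mh Hh).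
Qed.

Lemma serabs_lead (f : M -> k) m : sv f -> supp f m ->
  (forall h, glt m h -> f h = 0) ->
  0 < serabs f m /\ (forall h, glt m h -> serabs f h = 0).
Proof.
move=> Vf fm z. have vm := Vf _ fm.
rewrite /serabs; case: excluded_middle_informative => [Hp|np].
- have [g [p0 zg]] := Hp.
  have p : 0 < f g by move: p0; rewrite /ser0 subr0.
  have vg : gvalid g by apply: Vf; rewrite /supp gt_eqF.
  have [lt|[eq|gt]] := Htot vg vm.
  + by have := zg m lt; rewrite /ser0 subr0 => e; move: fm; rewrite /supp e eqxx.
  + by subst; split=> //= h mh; rewrite z.
  + by rewrite (z g gt) ltxx in p.
- rewrite /=; split; last by move=> h mh; rewrite /seropp z // oppr0.
  rewrite /seropp oppr_gt0. case: (ltrgt0P (f m)) => // [p|e].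
  + exfalso; apply: np; exists m; rewrite /ser0 subr0; split=> // h mh.
    by rewrite z // subr0.
  + by move: fm; rewrite /supp e eqxx.
Qed.

Lemma supp_serabs (f : M -> k) x : supp (serabs f) x <-> supp f x.
Proof. rewrite /serabs; case: excluded_middle_informative => ? /=; first by []. exact: supp_opp. Qed.

Definition ind (b : M) : M -> k :=
  fun x => if excluded_middle_informative (x = b) then 1 else 0.

Lemma ind_b b : ind b b = 1.
Proof. by rewrite /ind; case: excluded_middle_informative. Qed.
Lemma ind_nb b x : x <> b -> ind b x = 0.
Proof. by rewrite /ind; case: excluded_middle_informative. Qed.
Lemma supp_ind b x : supp (ind b) x -> x = b.
Proof. rewrite /supp /ind; case: excluded_middle_informative => // _ /=; by rewrite eqxx. Qed.

Lemma ind_pos b : serpos (ind b).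
Proof.
exists b; rewrite /ser0 ind_b subr0; split=> // h bh.
by rewrite ind_nb ?subr0 // => e; subst; exact: (Hirr bh).
Qed.

Lemma serabs_ind b : serabs (ind b) = ind b.
Proof. rewrite /serabs; case: excluded_middle_informative => H //=. by case: H; exact: ind_pos. Qed.

Lemma is_ser_on_ind (S : M -> Prop) b : S b -> is_ser_on S (ind b).
Proof.
move=> Sb; split; last by move=> x /supp_ind ->.
move=> Q [x Qx] HQ; exists b.
have Qb : Q b by have := supp_ind (HQ x Qx) => e; rewrite -e.
by split=> // y /HQ /supp_ind ->; left.
Qed.

Lemma ind_nz b : ind b <> @ser0 k M.
Proof. move=> e; have := f_equal (fun f => f b) e; rewrite ind_b /ser0 => /eqP; by rewrite oner_eq0. Qed.

End Gen.


Section LB.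
Variable k : realFieldType.
Variable M : ROG.
Hypothesis Hirr : forall x : M, ~ glt x x.
Hypothesis Htrans : forall x y z : M, gvalid x -> gvalid y -> gvalid z ->
  glt x y -> glt y z -> glt x z.
Hypothesis Htot : forall x y : M, gvalid x -> gvalid y -> glt x y \/ x = y \/ glt y x.

Lemma lb_aux (x c : M -> k) m : sv x -> sv c -> supp x m ->
  (forall h, glt m h -> ~ supp x h) ->
  (forall z, supp c z -> ~ (m = z \/ glt m z)) -> serlt x c -> x m < 0.
Proof.
move=> Vx Vc xm mx Hc [g [p zg]].
have vm := Vx _ xm.
have vg : gvalid g by apply: (diff_valid Vx Vc); rewrite gt_eqF.
have cm : c m = 0.
  by case: (eqVneq (c m) 0) => // nz; exfalso; apply: (Hc m nz); left.
have [lt|[eq|gt]] := Htot vg vm.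
- have := zg m lt; rewrite cm sub0r => /eqP; rewrite oppr_eq0 => e.
  by move: xm; rewrite /supp e.
- by subst; move: p; rewrite cm sub0r oppr_gt0.
- have xg : x g = 0.
    by case: (eqVneq (x g) 0) => // nz; exfalso; exact: (mx g gt nz).
  move: p; rewrite xg subr0 => p.
  by exfalso; apply: (Hc g); [rewrite /supp gt_eqF | right].
Qed.

Lemma lead_bound (x c : M -> k) : is_ser_on (@gvalid M) x -> sv c ->
  serlt x c -> serlt (seropp x) c ->
  forall y, supp x y -> exists z, supp c z /\ (y = z \/ glt y z).
Proof.
move=> [Wx Hx] Vc l1 l2 y xy.
have Vx : sv x by [].
have [m [xm mx]] := lead_of Hirr Htrans Hx Wx (ex_intro _ y xy).
have vm := Hx _ xm. have vy := Hx _ xy.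
have ym : y = m \/ glt y m.
  have [lt|[eq|gt]] := Htot vy vm; [by right|by left|by case: (mx y gt)].
case: (classic (exists z, supp c z /\ (m = z \/ glt m z))) => [[z [cz mz]]|N].
- exists z; split=> //. case: ym => [->//|ym]; right.
  case: mz => [<-//|mz]. exact: (Htrans vy vm (Vc _ cz) ym mz).
- exfalso.
  have Hc : forall z, supp c z -> ~ (m = z \/ glt m z) by move=> z cz h; apply: N; exists z.
  have a1 := lb_aux Vx Vc xm mx Hc l1.
  have Vx' : sv (seropp x) by move=> t /supp_opp /Vx.
  have a2 := lb_aux Vx' Vc (proj2 (supp_opp x m) xm) (fun h mh H => mx h mh (proj1 (supp_opp x h) H)) Hc l2.
  move: a2; rewrite /seropp oppr_lt0 => a2. by move: (lt_trans a1 a2); rewrite ltxx.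
Qed.
End LB.

Section Push.
Variable k : realFieldType.
Variables M N : ROG.
Variable phi : M -> N.
Hypothesis phi_inj : forall x y, phi x = phi y -> x = y.

Lemma push_phi (a : M -> k) x : push phi a (phi x) = a x.
Proof.
rewrite /push; case: excluded_middle_informative => [H|H] /=; last by case: H; exists x.
case: (constructive_indefinite_description _ H) => z /= e. by rewrite (phi_inj e).
Qed.

Lemma push_out (a : M -> k) y : ~ (exists x, phi x = y) -> push phi a y = 0.
Proof. by move=> H; rewrite /push; case: excluded_middle_informative. Qed.

Lemma push_cases (a : M -> k) y : (~ (exists x, phi x = y) /\ push phi a y = 0) \/
  exists x, phi x = y /\ push phi a y = a x.
Proof.
case: (classic (exists x, phi x = y)) => [[x <-]|H]; first by right; exists x; rewrite push_phi.
by left; split=> //; exact: push_out.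
Qed.

Lemma push_add (a b : M -> k) : push phi (seradd a b) = seradd (push phi a) (push phi b).
Proof.
apply: functional_extensionality => y; rewrite /seradd.
case: (push_cases (seradd a b) y) => [[H ->]|[x [<- ->]]].
- by rewrite !push_out // addr0.
- by rewrite !push_phi.
Qed.

Lemma push_opp (a : M -> k) : push phi (seropp a) = seropp (push phi a).
Proof.
apply: functional_extensionality => y; rewrite /seropp.
case: (push_cases (seropp a) y) => [[H ->]|[x [<- ->]]].
- by rewrite !push_out // oppr0.
- by rewrite !push_phi.
Qed.

Lemma push0 : push phi (@ser0 k M) = @ser0 k N.
Proof.
apply: functional_extensionality => y; rewrite /ser0.
by case: (push_cases (@ser0 k M) y) => [[H ->]|[x [<- ->]]].
Qed.

Lemma push_inj (a b : M -> k) : push phi a = push phi b -> a = b.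
Proof.
move=> e; apply: functional_extensionality => x.
by rewrite -(push_phi a) -(push_phi b) e.
Qed.

Lemma supp_push (a : M -> k) y : supp (push phi a) y -> exists x, phi x = y /\ supp a x.
Proof.
case: (push_cases a y) => [[H e]|[x [ex e]]]; first by rewrite /supp e eqxx.
by rewrite /supp e => h; exists x.
Qed.

Hypothesis MHirr : forall x : M, ~ glt x x.
Hypothesis MHtrans : forall x y z : M, gvalid x -> gvalid y -> gvalid z ->
  glt x y -> glt y z -> glt x z.
Hypothesis MHtot : forall x y : M, gvalid x -> gvalid y -> glt x y \/ x = y \/ glt y x.
Hypothesis NHirr : forall x : N, ~ glt x x.
Hypothesis NHtrans : forall x y z : N, gvalid x -> gvalid y -> gvalid z ->
  glt x y -> glt y z -> glt x z.
Hypothesis phi_mono : forall x y, gvalid x -> gvalid y -> glt x y -> glt (phi x) (phi y).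
Hypothesis phi_valid : forall x, gvalid x -> gvalid (phi x).

Lemma push_lt (a b : M -> k) : sv a -> sv b -> serlt a b -> serlt (push phi a) (push phi b).
Proof.
move=> Va Vb [g [p zg]].
have vg : gvalid g by apply: (diff_valid Va Vb); rewrite gt_eqF.
exists (phi g); rewrite !push_phi; split=> // y gy.
case: (classic (exists x, phi x = y)) => [[x ex]|H]; last by rewrite !push_out // subr0.
subst y; rewrite !push_phi.
case: (eqVneq (b x - a x) 0) => // nz.
have vx := diff_valid Va Vb nz.
have [lt|[eq|gt]] := MHtot vx vg.
- exfalso; apply: (NHirr (x := phi x)).
  exact: (NHtrans (phi_valid vx) (phi_valid vg) (phi_valid vx) (phi_mono vx vg lt) gy).
- by subst; case: (NHirr gy).
- exact: zg.
Qed.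

Hypothesis phi_pos : forall x, gvalid x -> glt (gone M) x -> glt (gone N) (phi x).

Lemma push_valid (a : M -> k) :
  is_ser_on (fun x => gvalid x /\ glt (gone M) x) a ->
  is_ser_on (fun y => gvalid y /\ glt (gone N) y) (push phi a).
Proof.
move=> [W H]; split; last first.
  move=> y /supp_push [x [<- /H [vx px]]]; split; [exact: phi_valid | exact: phi_pos].
move=> Q [y Qy] HQ.
have [x0 [ex0 sx0]] := supp_push (HQ y Qy).
have E : exists x, supp a x /\ Q (phi x) by exists x0; rewrite ex0.
have [m [[sm Qm] Mm]] := W (fun x => supp a x /\ Q (phi x)) E (fun x h => proj1 h).
exists (phi m); split=> // z Qz.
have [x [ex sx]] := supp_push (HQ z Qz). subst z.
case: (Mm x (conj sx Qz)) => [->|lt]; first by left.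
right; apply: phi_mono => //; [exact: (proj1 (H _ sx)) | exact: (proj1 (H _ sm))].
Qed.
End Push.


Definition LP (M : ROG) : Prop :=
  (forall x : M, ~ glt x x) /\
  (forall x y z : M, gvalid x -> gvalid y -> gvalid z -> glt x y -> glt y z -> glt x z) /\
  (forall x y : M, gvalid x -> gvalid y -> glt x y \/ x = y \/ glt y x) /\
  gvalid (gone M).

Lemma LP_sharp (k : realFieldType) (M : ROG) : LP M -> LP (sharp k M).
Proof.
move=> [Hirr [Htrans [Htot _]]].
have sv_of : forall a : sharp k M, gvalid a -> sv a.
  by move=> a /= Va; apply: (is_ser_on_sv (S := fun x => gvalid x /\ glt (gone M) x)) => // x [].
split; [|split; [|split]].
- move=> x; exact: serlt_irr.
- move=> x y z /sv_of vx /sv_of vy /sv_of vz; exact: serlt_trans.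
- move=> x y /= vx vy; apply: serlt_total => //.
  + by apply: is_ser_on_mono vx => t [].
  + by apply: is_ser_on_mono vy => t [].
- exact: is_ser_on0.
Qed.

Section Tower2.
Variables (k : realFieldType) (G : ROG) (l : G -> (G -> k)).
Hypothesis HGall : forall x : G, gvalid x.
Hypothesis HG : ordered_abelian_group (@gop G) (gone G) (@ginv G) (@glt G).
Hypothesis Hl_ser : forall g : G, @is_ser_on k G (fun x => glt (gone G) x) (l g).
Hypothesis Hl_mul : forall g h : G, l (gop g h) = @seradd k G (l g) (l h).
Hypothesis Hl_mono : forall g h : G, glt g h -> @serlt k G (l g) (l h).

Definition UP (n : nat) : Prop :=
  let u := @up k G l n in
  (forall x y, u x = u y -> x = y) /\
  (forall x y, u (gop x y) = seradd (u x) (u y)) /\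
  (forall x, u (ginv x) = seropp (u x)) /\
  u (gone _) = @ser0 k _ /\
  (forall x y, gvalid x -> gvalid y -> glt x y -> glt (u x) (u y)) /\
  (forall x, gvalid x -> gvalid (u x)).

Lemma LP0 : LP G.
Proof.
have [_ [_ [_ [_ [Hirr [Htrans [Htot _]]]]]]] := HG.
split; [exact: Hirr | split; [move=> x y z _ _ _; exact: Htrans | split]].
- by move=> x y _ _; exact: Htot.
- exact: HGall.
Qed.

Lemma UP0 : UP 0.
Proof.
have [Ha [Hc [Hu [Hi [Hirr [Htrans [Htot _]]]]]]] := HG.
have l1 : l (gone G) = @ser0 k G.
  apply: functional_extensionality => x.
  have := f_equal (fun f => f x) (Hl_mul (gone G) (gone G)).
  rewrite Hu /seradd /ser0 => e.
  have e2 : l (gone G) x + l (gone G) x = l (gone G) x + 0 by rewrite addr0 -e.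
  exact: (addrI _ e2).
split; [|split; [|split; [|split; [|split]]]] => /=.
- move=> x y e. have [lt|[eq|gt]] := Htot x y => //.
  + by have := Hl_mono lt; rewrite e => /serlt_irr.
  + by have := Hl_mono gt; rewrite e => /serlt_irr.
- exact: Hl_mul.
- move=> x; apply: functional_extensionality => t.
  have := f_equal (fun f => f t) (Hl_mul (ginv x) x).
  rewrite Hi l1 /seradd /ser0 /seropp => e. apply/eqP; rewrite -addr_eq0.
  by rewrite -e.
- exact: l1.
- by move=> x y _ _; exact: Hl_mono.
- move=> x _ /=; apply: is_ser_on_mono (Hl_ser x) => t tt; split=> //.
Qed.

Lemma levels n : LP (lvl k G n) /\ UP n.
Proof.
elim: n => [|n [LPn UPn]]; first by split; [exact: LP0 | exact: UP0].
have LPn1 : LP (lvl k G n.+1) by exact: LP_sharp.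
split=> //.
have [Mirr [Mtrans [Mtot Mone]]] := LPn.
have [Nirr [Ntrans [Ntot None]]] := LPn1.
have [uinj [uadd [uopp [u0 [umono uval]]]]] := UPn.
rewrite /UP /=.
split; [|split; [|split; [|split; [|split]]]].
- move=> x y /push_inj; exact.
- move=> x y; exact: push_add.
- move=> x; exact: push_opp.
- exact: push0.
- move=> x y vx vy; apply: push_lt => //.
  + by apply: (is_ser_on_sv (S := fun x => gvalid x /\ glt (gone _) x)) => // t [].
  + by apply: (is_ser_on_sv (S := fun x => gvalid x /\ glt (gone _) x)) => // t [].
- move=> x vx; apply: push_valid => //.
  move=> t vt pt. have := umono _ _ Mone vt pt. by rewrite u0.
Qed.
End Tower2.


Section Step.
Variables (k : realFieldType) (G : ROG) (l : G -> (G -> k)).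
Hypothesis HGall : forall x : G, gvalid x.
Hypothesis HG : ordered_abelian_group (@gop G) (gone G) (@ginv G) (@glt G).
Hypothesis Hl_ser : forall g : G, @is_ser_on k G (fun x => glt (gone G) x) (l g).
Hypothesis Hl_mul : forall g h : G, l (gop g h) = @seradd k G (l g) (l h).
Hypothesis Hl_mono : forall g h : G, glt g h -> @serlt k G (l g) (l h).
Variable H : G -> Prop.

Definition IH (n : nat) : Prop :=
  (forall x, @Hpow k G l H n x -> gvalid x) /\
  @subgroup (lvl k G n) (@Hpow k G l H n) /\
  @growth_rel k G l n (@Hpow k G l H n) (@above (lvl k G n) (@Hpow k G l H n) (@HP k G l H n).2) /\
  (exists b, @above (lvl k G n) (@Hpow k G l H n) (@HP k G l H n).2 b) /\
  (@HP k G l H n).2 (gone _).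

Variable n : nat.
Hypothesis IHn : IH n.

Let A := @Hpow k G l H n.
Let P := (@HP k G l H n).2.
Let S := @above (lvl k G n) A P.
Let u := @up k G l n.
Let HnE := @img_of (lvl k G n) (lvl k G n.+1) u A.
Let E := @Expset k G n S.
Let Hn1 := @Hpow k G l H n.+1.

Lemma Hn1E x : Hn1 x <-> exists a al, A a /\ E al /\ x = seradd (u a) al.
Proof.
split.
- move=> [a' [b [[a [Aa <-]] [Eb ->]]]]; by exists a, b.
- move=> [a [al [Aa [Eal ->]]]]; exists (u a), al; split=> //; by exists a.
Qed.

Lemma HP2 : (@HP k G l H n.+1).2 = HnE.
Proof. by []. Qed.

Let LPn := proj1 (levels HGall HG Hl_ser Hl_mul Hl_mono n).
Let UPn := proj2 (levels HGall HG Hl_ser Hl_mul Hl_mono n).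
Let LPn1 := proj1 (levels HGall HG Hl_ser Hl_mul Hl_mono n.+1).

Let Mirr := proj1 LPn.
Let Mtrans := proj1 (proj2 LPn).
Let Mtot := proj1 (proj2 (proj2 LPn)).
Let Nirr := proj1 LPn1.
Let Ntrans := proj1 (proj2 LPn1).
Let Ntot := proj1 (proj2 (proj2 LPn1)).

Let uinj := proj1 UPn.
Let uadd := proj1 (proj2 UPn).
Let uopp := proj1 (proj2 (proj2 UPn)).
Let u0 := proj1 (proj2 (proj2 (proj2 UPn))).
Let umono := proj1 (proj2 (proj2 (proj2 (proj2 UPn)))).
Let uval := proj2 (proj2 (proj2 (proj2 (proj2 UPn)))).

Let Aval := proj1 IHn.
Let Asub := proj1 (proj2 IHn).
Let grow := proj1 (proj2 (proj2 IHn)).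
Let Sne := proj1 (proj2 (proj2 (proj2 IHn))).
Let Pone := proj2 (proj2 (proj2 (proj2 IHn))).

Lemma A1 : A (gone _). Proof. exact: (proj1 Asub). Qed.
Lemma Amul x y : A x -> A y -> A (gop x y). Proof. exact: (proj1 (proj2 Asub)). Qed.
Lemma Ainv x : A x -> A (ginv x). Proof. exact: (proj2 (proj2 Asub)). Qed.

Lemma growA a f : A a -> is_ser_on S f -> f <> @ser0 k _ -> serlt (u a) (serabs f).
Proof. move=> Aa Sf nz; exact: (grow Aa Sf nz). Qed.

Lemma S_A x : S x -> A x. Proof. by case. Qed.
Lemma S_val x : S x -> gvalid x. Proof. by move=> /S_A /Aval. Qed.
Lemma S_pos x : S x -> glt (gone _) x. Proof. by move=> [_ h]; apply: h. Qed.

Definition V1 (x : lvl k G n.+1) : Prop := gvalid x.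
Lemma V1_sv (x : lvl k G n.+1) : gvalid x -> sv (x : lvl k G n -> k).
Proof. move=> Vx. apply: (is_ser_on_sv (S := fun x => gvalid x /\ glt (gone _) x)) Vx. by move=> t []. Qed.
Lemma V1_ser (x : lvl k G n.+1) : gvalid x -> is_ser_on (@gvalid _) (x : lvl k G n -> k).
Proof. move=> Vx. by apply: is_ser_on_mono Vx => t []. Qed.
Lemma V1_add (x y : lvl k G n.+1) : gvalid x -> gvalid y -> gvalid (seradd x y : lvl k G n.+1).
Proof. move=> vx vy; apply: (is_ser_on_add Mtrans Mtot) => //; by move=> t []. Qed.
Lemma V1_opp (x : lvl k G n.+1) : gvalid x -> gvalid (seropp x : lvl k G n.+1).
Proof. exact: is_ser_on_opp. Qed.

Lemma uA_val a : A a -> gvalid (u a). Proof. by move=> /Aval /uval. Qed.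
Lemma E_val al : E al -> gvalid al. Proof. by case. Qed.
Lemma E_ser al : E al -> is_ser_on S al. Proof. by case. Qed.

Lemma ltN1 (x y z : lvl k G n.+1) : gvalid x -> gvalid y -> gvalid z ->
  serlt x y -> serlt y z -> serlt x z.
Proof. exact: Ntrans. Qed.

Lemma noE a x : A a -> is_ser_on S x -> x <> @ser0 k _ -> u a = x -> False.
Proof.
move=> Aa Sx nz e.
have g1 := growA Aa Sx nz. have g2 := growA (Ainv Aa) Sx nz.
rewrite /u uopp -/u e in g2. rewrite e in g1.
move: g1 g2; rewrite /serabs; case: excluded_middle_informative => _ /= g1 g2.
- exact: (serlt_irr g1).
- exact: (serlt_irr g2).
Qed.

Lemma E0 : E (@ser0 k _).
Proof. split; [exact: is_ser_on0 | exact: is_ser_on0]. Qed.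
Lemma Eadd x y : E x -> E y -> E (seradd x y).
Proof.
move=> [vx sx] [vy sy]; split.
- exact: V1_add.
- apply: (is_ser_on_add Mtrans Mtot) => //; exact: S_val.
Qed.
Lemma Eopp x : E x -> E (seropp x).
Proof. move=> [vx sx]; split; exact: is_ser_on_opp. Qed.

Lemma add0s (x : lvl k G n -> k) : seradd (@ser0 k _) x = x.
Proof. apply: functional_extensionality => t; by rewrite /seradd /ser0 add0r. Qed.
Lemma adds0 (x : lvl k G n -> k) : seradd x (@ser0 k _) = x.
Proof. apply: functional_extensionality => t; by rewrite /seradd /ser0 addr0. Qed.

Lemma Hn1_val x : Hn1 x -> gvalid x.
Proof. move=> /Hn1E [a [al [Aa [Eal ->]]]]. apply: V1_add; [exact: uA_val | exact: E_val]. Qed.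

Lemma Hn1_sub : @subgroup (lvl k G n.+1) Hn1.
Proof.
split; [|split].
- apply/Hn1E; exists (gone _), (@ser0 k _); split; first exact: A1.
  split; first exact: E0. by rewrite /u u0 adds0.
- move=> x y /Hn1E [a [al [Aa [Eal ->]]]] /Hn1E [b [be [Ab [Ebe ->]]]].
  apply/Hn1E; exists (gop a b), (seradd al be); split; first exact: Amul.
  split; first exact: Eadd.
  rewrite /u uadd. apply: functional_extensionality => t; simpl; cbv [seradd]. ring.
- move=> x /Hn1E [a [al [Aa [Eal ->]]]].
  apply/Hn1E; exists (ginv a), (seropp al); split; first exact: Ainv.
  split; first exact: Eopp.
  rewrite /u uopp. apply: functional_extensionality => t; simpl; cbv [seradd seropp]. ring.
Qed.

Lemma HnE_sub : @subgroup (lvl k G n.+1) HnE.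
Proof.
split; [|split].
- exists (gone _); split; [exact: A1 | exact: u0].
- move=> x y [a [Aa <-]] [b [Ab <-]]; exists (gop a b); split; [exact: Amul|exact: uadd].
- move=> x [a [Aa <-]]; exists (ginv a); split; [exact: Ainv|exact: uopp].
Qed.

Lemma E_sub : @subgroup (lvl k G n.+1) E.
Proof. split; [exact: E0 | split; [exact: Eadd | exact: Eopp]]. Qed.

Lemma HnE_Hn1 x : HnE x -> Hn1 x.
Proof.
move=> [a [Aa <-]]; apply/Hn1E; exists a, (@ser0 k _); split=> //; split; first exact: E0.
by rewrite adds0.
Qed.

Lemma b0_ex : exists b0, S b0. Proof. exact: Sne. Qed.

Lemma E_ind b : S b -> E (ind k b).
Proof.
move=> Sb; split; apply: is_ser_on_ind => //; split; [exact: S_val | exact: S_pos].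
Qed.

Lemma proper : exists x, Hn1 x /\ ~ HnE x.
Proof.
have [b Sb] := b0_ex.
exists (ind k b); split.
- apply/Hn1E; exists (gone _), (ind k b); split; first exact: A1.
  split; first exact: E_ind. by rewrite /u u0 add0s.
- move=> [a [Aa e]]. apply: (noE Aa _ _ e); [exact: is_ser_on_ind | exact: ind_nz].
Qed.

Lemma inter x : HnE x -> E x -> x = gone _.
Proof.
move=> [a [Aa e]] [_ Sx]. apply: NNPP => nz. exact: (noE Aa Sx nz e).
Qed.

Lemma diffE (x y : lvl k G n -> k) : seradd x (seropp y) = seradd x (seropp y).
Proof. by []. Qed.

Lemma convex : @convex_in (lvl k G n.+1) HnE Hn1.
Proof.
move=> a1 a2 x [c1 [Ac1 <-]] [c2 [Ac2 <-]] /Hn1E [a [al [Aa [Eal ->]]]] h1 h2.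
case: (classic (al = @ser0 k _)) => [->|nz].
  by exists a; rewrite adds0.
exfalso.
have [val Sal] := Eal.
have va := uA_val Aa.
case: (classic (serpos al)) => sp.
- have g := growA (Amul Ac2 (Ainv Aa)) Sal nz.
  move: g; rewrite /serabs; case: excluded_middle_informative => // _ /= g.
  rewrite /u uadd uopp -/u in g.
  have vw : gvalid (seradd (u c2) (seropp (u a)) : lvl k G n.+1).
    apply: V1_add; [exact: uA_val | apply: V1_opp; exact: uA_val].
  case: h2 => [lt|eq].
  + have lt' : serlt al (seradd (u c2) (seropp (u a))).
      apply: serlt_ext lt => t; rewrite /seradd /seropp; ring.
    exact: (Nirr (ltN1 val vw val lt' g)).
  + have e : seradd (u c2) (seropp (u a)) = al.
      apply: functional_extensionality => t; rewrite -eq /seradd /seropp; ring.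
    rewrite e in g; exact: (serlt_irr g).
- have g := growA (Amul Aa (Ainv Ac1)) Sal nz.
  move: g; rewrite /serabs; case: excluded_middle_informative => // _ /= g.
  rewrite /u uadd uopp -/u in g.
  have vw : gvalid (seradd (u a) (seropp (u c1)) : lvl k G n.+1).
    apply: V1_add; [exact: uA_val | apply: V1_opp; exact: uA_val].
  have vo : gvalid (seropp al : lvl k G n.+1) by apply: V1_opp.
  case: h1 => [lt|eq].
  + have lt' : serlt (seropp al) (seradd (u a) (seropp (u c1))).
      apply: serlt_ext lt => t; rewrite /seradd /seropp; ring.
    exact: (Nirr (ltN1 vo vw vo lt' g)).
  + have e : seradd (u a) (seropp (u c1)) = seropp al.
      apply: functional_extensionality => t; rewrite eq /seradd /seropp; ring.
    rewrite e in g; exact: (serlt_irr g).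
Qed.


Lemma grow1 : @growth_rel k G l n.+1 Hn1 (@above (lvl k G n.+1) Hn1 HnE).
Proof.
move=> h Hh f Sf nz.
change (serlt (push u h) (serabs f)).
have [a [al [Aa [Eal eh]]]] := (Hn1E h).1 Hh.
have vh := Hn1_val Hh.
have [b0 Sb0] := b0_ex.
have svi : sv (ind k b0) by move=> t /supp_ind ->; exact: S_val.
have C : forall y, supp h y -> exists z, A z /\ (y = z \/ glt y z).
  move=> y; rewrite eh => /supp_add [sy|sy].
  - have l1 : serlt (u a) (ind k b0).
      have := growA Aa (@is_ser_on_ind k _ _ _ Sb0) (@ind_nz _ _ b0); by rewrite (@serabs_ind k _ Mirr).
    have l2 : serlt (seropp (u a)) (ind k b0).
      have := growA (Ainv Aa) (@is_ser_on_ind k _ _ _ Sb0) (@ind_nz _ _ b0).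
      by rewrite (@serabs_ind k _ Mirr) /u uopp.
    have [z [sz yz]] := @lead_bound k _ Mirr Mtrans Mtot _ _ (V1_ser (uA_val Aa)) svi l1 l2 _ sy.
    exists z; split=> //. rewrite (supp_ind sz); exact: S_A.
  - exists y; split; last by left.
    apply: S_A; exact: (proj2 (E_ser Eal) y sy).
have Sf' : is_ser_on (@gvalid (lvl k G n.+1)) f.
  apply: is_ser_on_mono Sf => t [Ht _]; exact: Hn1_val.
have svf : sv f by apply: (is_ser_on_sv (S := @gvalid _)).
have [m [fm mz]] := @ser_lead k _ Nirr Ntrans _ Sf' nz.
have vm : gvalid m := svf _ fm.
have mab : forall p, HnE p -> glt p m by move=> p Hp; exact: (proj2 (proj2 Sf m fm) p Hp).
have svh := V1_sv vh.
have key : forall y, supp h y -> glt (u y) m.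
  move=> y sy. have vy := svh _ sy.
  have [z [Az [yz|yz]]] := C y sy.
  - subst; apply: mab; by exists z.
  - have uzm := mab (u z) (ex_intro _ z (conj Az erefl)).
    exact: (Ntrans (uval vy) (uval (Aval Az)) vm (umono vy (Aval Az) yz) uzm).
have [pos zer] := @serabs_lead k _ Ntot _ _ svf fm mz.
have pz : forall y, (y = m \/ glt m y) -> push u h y = 0.
  move=> y ym. case: (push_cases uinj h y) => [[_ ->]//|[x [ex ->]]].
  case: (eqVneq (h x) 0) => // nx; exfalso.
  have kx := key x nx. rewrite /u in kx. have vx := svh _ nx.
  case: ym => [e|my].
  + rewrite e in ex; rewrite ex in kx; exact: (Nirr kx).
  + rewrite -ex in my. exact: (Nirr (Ntrans (uval vx) vm (uval vx) kx my)).
exists m; split.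
- by rewrite pz ?subr0 //; left.
- by move=> y my; rewrite zer // pz ?subr0 //; right.
Qed.

Lemma step_concl :
  @proper_convex_subgroup (lvl k G n.+1) HnE Hn1 /\
  @antilex_product (lvl k G n.+1) HnE E Hn1 /\
  @growth_rel k G l n.+1 Hn1 (@above (lvl k G n.+1) Hn1 HnE).
Proof.
split; [|split].
- split; [exact: HnE_sub | split; [exact: Hn1_sub | split; [exact: HnE_Hn1 | split; [exact: proper | exact: convex]]]].
- split; [exact: HnE_sub | split; [exact: E_sub | split; [by [] | split; [exact: inter | exact: convex]]]].
- exact: grow1.
Qed.

Lemma step_IH : IH n.+1.
Proof.
split; [|split; [|split; [|split]]].
- exact: Hn1_val.
- exact: Hn1_sub.
- exact: grow1.
- have [b0 Sb0] := b0_ex. exists (ind k b0); split.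
  + apply/Hn1E; exists (gone _), (ind k b0); split; first exact: A1.
    split; first exact: E_ind. by rewrite /u u0 add0s.
  + move=> p [a [Aa <-]].
    have := growA Aa (@is_ser_on_ind k _ _ _ Sb0) (@ind_nz _ _ b0); by rewrite (@serabs_ind k _ Mirr).
- exists (gone _); split; [exact: A1 | exact: u0].
Qed.

End Step.


Unset Implicit Arguments. Set Strict Implicit.
Theorem proposition8
  (k : realFieldType) (log : k -> k)
  (Hlog_mul : forall a b : k, 0 < a -> 0 < b -> log (a * b) = log a + log b)
  (Hlog_mono : forall a b : k, 0 < a -> a < b -> log a < log b)
  (Hlog_surj : forall y : k, exists x : k, 0 < x /\ log x = y)
  (G : ROG)
  (HGall : forall x : G, gvalid x)
  (HG : ordered_abelian_group (@gop G) (gone G) (@ginv G) (@glt G))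
  (l : G -> (G -> k))
  (Hl_ser : forall g : G, @is_ser_on k G (fun x => glt (gone G) x) (l g))
  (Hl_mul : forall g h : G, l (gop g h) = @seradd k G (l g) (l h))
  (Hl_mono : forall g h : G, glt g h -> @serlt k G (l g) (l h))
  (H : G -> Prop)
  (HH_sub : @subgroup G H)
  (HH_nontriv : exists h, H h /\ h <> gone G)
  (HH_growth : @growth_rel k G l 0 H (@above G H (fun x => x = gone G))) :
  forall n : nat,
    let Hn := @Hpow k G l H n in
    let Hn1 := @Hpow k G l H n.+1 in
    let Hprev := (@HP k G l H n).2 in
    let HnE := @img_of (lvl k G n) (lvl k G n.+1) (@up k G l n) Hn in
    let E := @Expset k G n (@above (lvl k G n) Hn Hprev) in
    @proper_convex_subgroup (lvl k G n.+1) HnE Hn1 /\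
    @antilex_product (lvl k G n.+1) HnE E Hn1 /\
    @growth_rel k G l n.+1 Hn1 (@above (lvl k G n.+1) Hn1 HnE).
Proof.
have IH0 : IH l H 0.
  split; [|split; [|split; [|split]]].
  - move=> x _; exact: HGall.
  - exact: HH_sub.
  - exact: HH_growth.
  - have [Ha [Hc [Hu [Hi [Hirr [Htrans [Htot Htr]]]]]]] := HG.
    have [h [Hh nh]] := HH_nontriv.
    have [lt|[eq|gt]] := Htot h (gone G).
    + exists (ginv h); split; first exact: (proj2 (proj2 HH_sub) h Hh).
      move=> b /= ->. have := Htr _ _ (ginv h) lt. by rewrite Hc Hi Hu.
    + by case: nh.
    + exists h; split=> // b /= ->; exact: gt.
  - by [].
have IHall : forall n, IH l H n.
  elim=> [|n IHn] //; exact: (step_IH HGall HG Hl_ser Hl_mul Hl_mono IHn).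
move=> n /=. exact: (step_concl HGall HG Hl_ser Hl_mul Hl_mono (IHall n)).
Qed.
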